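(* Let $k=1$ and let $\mathcal{X}=\{\boldsymbol{x}_i\}_{i=1}^n\subset\mathbb{R}^d$ be a dataset all of whose points have unit Euclidean norm, so that $\mathcal{S}=\{\mathcal{X}\}$ is the single cluster. Let $\boldsymbol{c}=\mathrm{tm}(t,\mathcal{X})$ and $\overline{\phi}(t,\mathcal{S},\mathcal{C})=\frac1t\log\frac1n\sum_{i=1}^n e^{t\|\boldsymbol{x}_i-\boldsymbol{c}\|^2}$ with $\mathcal{C}=\{\boldsymbol{c}\}$. Then for any $t\ge0$, $$\frac{\partial\overline{\phi}(t,\mathcal{S},\mathcal{C})}{\partial t}\ge0.$$
   Context: The tilted mean operator: $\boldsymbol{c}=\mathrm{tm}(t,\mathcal{X})$ denotes the point $\boldsymbol{c}\in\mathbb{R}^d$ satisfying $\sum_{i=1}^n e^{t\|\boldsymbol{x}_i-\boldsymbol{c}\|^2}(\boldsymbol{x}_i-\boldsymbol{c})=0$. At $t=0$ the tilted SSE is defined as its limit, the ordinary SSE $\frac1n\sum_{i=1}^n\|\boldsymbol{x}_i-\boldsymbol{c}\|^2$. *)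

(* Defs.v *)
From HB Require Import structures.
From mathcomp Require Import all_boot all_order all_algebra.
From mathcomp Require Import all_classical all_reals all_analysis.
Set Implicit Arguments. Unset Strict Implicit. Unset Printing Implicit Defensive.
Import Order.TTheory GRing.Theory Num.Theory.
Local Open Scope ring_scope.

Definition sqnorm (R : realType) (d : nat) (v : 'rV[R]_d) : R :=
  \sum_(j < d) (v 0 j) ^+ 2.

Definition enorm (R : realType) (d : nat) (v : 'rV[R]_d) : R :=
  Num.sqrt (sqnorm v).

Definition is_tilted_mean (R : realType) (n d : nat) (t : R)
    (X : 'I_n -> 'rV[R]_d) (c : 'rV[R]_d) : Prop :=
  \sum_(i < n) expR (t * sqnorm (X i - c)) *: (X i - c) = 0.

(* tilted SSE  phibar(t, S, C) = (1/t) log (1/n) sum_i e^{t ||x_i - c||^2},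
   with its limit, the ordinary SSE (1/n) sum ||x_i - c||^2, at t = 0 *)
Definition tilted_sse (R : realType) (n d : nat) (t : R)
    (X : 'I_n -> 'rV[R]_d) (c : 'rV[R]_d) : R :=
  if t == 0 then (n%:R)^-1 * \sum_(i < n) sqnorm (X i - c)
  else t^-1 * ln ((n%:R)^-1 * \sum_(i < n) expR (t * sqnorm (X i - c))).

(* f has derivative D at t, relative to the domain t >= 0
   (a one-sided derivative at t = 0, the ordinary one for t > 0). *)
Definition has_deriv_nonneg (R : realType) (f : R -> R) (t D : R) : Prop :=
  forall eps : R, 0 < eps -> exists2 delta : R, 0 < delta &
    forall s : R, 0 <= s -> s != t -> `|s - t| < delta ->
      `|(f s - f t) / (s - t) - D| < eps.

(* Main.v *)
Require Import Defs.
From HB Require Import structures.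
From mathcomp Require Import all_boot all_order all_algebra.
From mathcomp Require Import all_classical all_reals all_analysis.
From mathcomp Require Import ring lra.
Import Order.TTheory GRing.Theory Num.Theory.
Local Open Scope ring_scope.

Lemma exp_tan (R : realType) (p w : R) : 1 <= p -> p * expR w <= expR (p*w) + p - 1.
Proof.
move=> p1.
have p0 : 0 < p by apply: lt_le_trans p1.
have i0 : 0 <= p^-1 by rewrite invr_ge0 ltW.
have i1 : p^-1 <= 1 by rewrite invf_le1.
have := @convex_expR R (Itv01 i0 i1) (p * w) 0.
rewrite !convRE /= /unstable.onem.
rewrite mulr0 addr0 mulrA mulVf ?gt_eqF // mul1r expR0 mulr1 => h.
have := ler_wpM2l (ltW p0) h.
rewrite mulrDr mulrA mulfV ?gt_eqF // mul1r mulrBr mulr1 mulfV ?gt_eqF //.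
by rewrite addrA.
Qed.
Lemma lme_mono (R : realType) (n : nat) (a : 'I_n -> R) (t s : R) :
  (0 < n)%N -> 0 < t -> t <= s ->
  t^-1 * ln ((n%:R)^-1 * \sum_(i < n) expR (t * a i)) <=
  s^-1 * ln ((n%:R)^-1 * \sum_(i < n) expR (s * a i)).
Proof.
move=> n0 t0 ts.
have s0 : 0 < s by apply: lt_le_trans ts.
have nR : 0 < n%:R :> R by rewrite ltr0n.
have Sp : forall u, 0 < \sum_(i < n) expR (u * a i).
  move=> u; rewrite (bigD1 (Ordinal n0)) //=.
  by apply: ltr_pwDl; [exact: expR_gt0 | apply: sumr_ge0 => i _; exact: expR_ge0].
set M := (n%:R)^-1 * \sum_(i < n) expR (t * a i).
have M0 : 0 < M by rewrite /M mulr_gt0 // invr_gt0.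
set L := ln M.
set p := s / t.
have p1 : 1 <= p by rewrite /p ler_pdivlMr // mul1r.
have key : forall i : 'I_n, p * expR (t * a i - L) <= expR (s * a i - p * L) + p - 1.
  move=> i; have := @exp_tan R p (t * a i - L) p1.
  by rewrite mulrBr /p mulrA divfK ?gt_eqF.
have sum1 : \sum_(i < n) p * expR (t * a i - L) <= \sum_(i < n) (expR (s * a i - p * L) + p - 1).
  by apply: ler_sum => i _; exact: key.
rewrite -mulr_sumr in sum1.
have E1 : \sum_(i < n) expR (t * a i - L) = n%:R.
  under eq_bigr do rewrite expRB.
  rewrite -mulr_suml /L lnK; last by rewrite posrE.
  rewrite /M invfM invrK mulrA mulrAC mulfV ?mul1r //; by rewrite gt_eqF.
rewrite E1 in sum1.
have E2 : \sum_(i < n) (expR (s * a i - p * L) + p - 1) =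
   (\sum_(i < n) expR (s * a i)) / expR (p * L) + n%:R * (p - 1).
  under eq_bigr do rewrite -addrA.
  rewrite big_split /=.
  under eq_bigr do rewrite expRB.
  rewrite -mulr_suml; congr (_ + _).
  by rewrite sumr_const card_ord mulr_natl.
rewrite E2 in sum1.
have H : expR (p * L) <= (n%:R)^-1 * \sum_(i < n) expR (s * a i).
  have h2 : n%:R <= (\sum_(i < n) expR (s * a i)) / expR (p * L) by nra.
  rewrite ler_pdivlMr ?expR_gt0 // in h2.
  by rewrite ler_pdivlMl // mulrC.
have Hln : p * L <= ln ((n%:R)^-1 * \sum_(i < n) expR (s * a i)).
  by rewrite -ler_expR lnK // posrE (lt_le_trans (expR_gt0 _) H).
have -> : t^-1 * L = s^-1 * (p * L).
  by rewrite /p mulrA mulrA mulVf ?gt_eqF // mul1r.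
by apply: ler_wpM2l; [rewrite invr_ge0 ltW | exact: Hln].
Qed.
Lemma jensen0 (R : realType) (n : nat) (a : 'I_n -> R) (s : R) :
  (0 < n)%N -> 0 < s ->
  (n%:R)^-1 * \sum_(i < n) a i <=
  s^-1 * ln ((n%:R)^-1 * \sum_(i < n) expR (s * a i)).
Proof.
move=> n0 s0.
have nR : 0 < n%:R :> R by rewrite ltr0n.
set m := (n%:R)^-1 * \sum_(i < n) a i.
have key : forall i : 'I_n, 1 + (s * a i - s * m) <= expR (s * a i - s * m).
  by move=> i; apply: expR_ge1Dx.
have sum1 : \sum_(i < n) (1 + (s * a i - s * m)) <= \sum_(i < n) expR (s * a i - s * m).
  by apply: ler_sum => i _; exact: key.
have E1 : \sum_(i < n) (1 + (s * a i - s * m)) = n%:R.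
  rewrite big_split /= sumr_const card_ord big_split /= -mulr_sumr sumr_const card_ord.
  rewrite /m -mulr_natr; have nz : n%:R != 0 :> R by rewrite gt_eqF.
  by field.
have E2 : \sum_(i < n) expR (s * a i - s * m) = (\sum_(i < n) expR (s * a i)) / expR (s * m).
  by under eq_bigr do rewrite expRB; rewrite -mulr_suml.
rewrite E1 E2 ler_pdivlMr ?expR_gt0 // in sum1.
have H : expR (s * m) <= (n%:R)^-1 * \sum_(i < n) expR (s * a i).
  by rewrite ler_pdivlMl // mulrC.
have Hln : s * m <= ln ((n%:R)^-1 * \sum_(i < n) expR (s * a i)).
  by rewrite -ler_expR lnK // posrE (lt_le_trans (expR_gt0 _) H).
have -> : m = s^-1 * (s * m) by rewrite mulrA mulVf ?gt_eqF // mul1r.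
by apply: ler_wpM2l; [rewrite invr_ge0 ltW | exact: Hln].
Qed.

Lemma tm_min (R : realType) (n d : nat) (t : R) (X : 'I_n -> 'rV[R]_d) (c c' : 'rV[R]_d) :
  is_tilted_mean t X c ->
  0 <= \sum_(i < n) expR (t * sqnorm (X i - c)) * (sqnorm (X i - c') - sqnorm (X i - c)).
Proof.
rewrite /is_tilted_mean => H.
set w := fun i => expR (t * sqnorm (X i - c)).
have Hj : forall j, \sum_(i < n) w i * (X i 0 j - c 0 j) = 0.
  move=> j; have := congr1 (fun M : 'rV[R]_d => M 0 j) H.
  rewrite /= summxE [RHS]mxE => Hj; apply: etrans Hj; apply: eq_bigr => i _.
  by rewrite !mxE.
have step : forall i, \sum_(j < d) (2 * ((X i 0 j - c 0 j) * (c 0 j - c' 0 j)))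
    <= sqnorm (X i - c') - sqnorm (X i - c).
  move=> i; rewrite /sqnorm -sumrB; apply: ler_sum => j _.
  rewrite !mxE.
  rewrite -subr_ge0.
  have -> : (X i 0 j - c' 0 j) ^+ 2 - (X i 0 j - c 0 j) ^+ 2 - 2 * ((X i 0 j - c 0 j) * (c 0 j - c' 0 j)) = (c 0 j - c' 0 j) ^+ 2 by ring.
  exact: sqr_ge0.
have : \sum_(i < n) w i * \sum_(j < d) (2 * ((X i 0 j - c 0 j) * (c 0 j - c' 0 j))) = 0.
  under eq_bigr do rewrite mulr_sumr.
  rewrite exchange_big /=.
  apply: big1 => j _.
  have -> : \sum_(i < n) w i * (2 * ((X i 0 j - c 0 j) * (c 0 j - c' 0 j)))
     = 2 * (c 0 j - c' 0 j) * \sum_(i < n) w i * (X i 0 j - c 0 j).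
    rewrite mulr_sumr; apply: eq_bigr => i _; ring.
  by rewrite Hj mulr0.
move=> Hz; rewrite -[X in X <= _]Hz.
apply: ler_sum => i _; apply: ler_wpM2l; first exact: expR_ge0.
exact: step.
Qed.

Lemma tm_min_exp (R : realType) (n d : nat) (t : R) (X : 'I_n -> 'rV[R]_d) (c c' : 'rV[R]_d) :
  0 <= t -> is_tilted_mean t X c ->
  \sum_(i < n) expR (t * sqnorm (X i - c)) <= \sum_(i < n) expR (t * sqnorm (X i - c')).
Proof.
move=> t0 H; have Hm := @tm_min R n d t X c c' H.
apply: (@le_trans _ _ (\sum_(i < n) (expR (t * sqnorm (X i - c)) +
   t * (expR (t * sqnorm (X i - c)) * (sqnorm (X i - c') - sqnorm (X i - c)))))).
  rewrite big_split /= -mulr_sumr lerDl; exact: mulr_ge0.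
apply: ler_sum => i _.
have -> : expR (t * sqnorm (X i - c')) = expR (t * sqnorm (X i - c)) *
    expR (t * (sqnorm (X i - c') - sqnorm (X i - c))).
  by rewrite -expRD; congr expR; ring.
have := expR_ge1Dx (t * (sqnorm (X i - c') - sqnorm (X i - c))).
move=> h; have := ler_wpM2l (expR_ge0 (t * sqnorm (X i - c))) h.
apply: le_trans; rewrite le_eqVlt; apply/orP; left; apply/eqP; ring.
Qed.

Theorem theorem5 (R : realType) (n d : nat) (X : 'I_n -> 'rV[R]_d)
    (c : R -> 'rV[R]_d) :
  (0 < n)%N ->
  (forall i, enorm (X i) = 1) ->
  (forall t : R, 0 <= t -> is_tilted_mean t X (c t)) ->
  forall t D : R, 0 <= t ->
    has_deriv_nonneg (fun s => tilted_sse s X (c s)) t D ->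
    0 <= D.
Proof.
move=> n0 _ Htm t D t0 Hder.
have nR : 0 < n%:R :> R by rewrite ltr0n.
have Sp : forall u (e : 'rV[R]_d), 0 < \sum_(i < n) expR (u * sqnorm (X i - e)).
  move=> u e; rewrite (bigD1 (Ordinal n0)) //=.
  by apply: ltr_pwDl; [exact: expR_gt0 | apply: sumr_ge0 => i _; exact: expR_ge0].
have mono : forall s, t < s -> tilted_sse t X (c t) <= tilted_sse s X (c s).
  move=> s ts.
  have s0 : 0 < s by apply: le_lt_trans ts.
  rewrite /tilted_sse (gt_eqF s0).
  have [->|tp] := eqVneq t 0.
    idtac.
    apply: le_trans (@jensen0 R n (fun i => sqnorm (X i - c s)) s n0 s0).
    apply: ler_wpM2l; first by rewrite invr_ge0 ltW.
    have := @tm_min R n d 0 X (c 0) (c s) (Htm 0 (lexx 0)).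
    under eq_bigr do rewrite mul0r expR0 mul1r.
    by rewrite sumrB subr_ge0.
  idtac.
  have tpos : 0 < t by rewrite lt_neqAle eq_sym tp t0.
  apply: le_trans (@lme_mono R n (fun i => sqnorm (X i - c s)) t s n0 tpos (ltW ts)).
  apply: ler_wpM2l; first by rewrite invr_ge0.
  rewrite ler_ln ?posrE ?mulr_gt0 ?invr_gt0 ?Sp //.
  apply: ler_wpM2l; first by rewrite invr_ge0 ltW.
  exact: (@tm_min_exp R n d t X (c t) (c s) t0 (Htm t t0)).
rewrite leNgt; apply/negP => D0.
have mD : 0 < - D by rewrite oppr_gt0.
have [delta dp Hd] := Hder (- D) mD.
set s := t + delta / 2.
have ts : t < s by rewrite /s ltrDl divr_gt0.
have := Hd s (ltW (le_lt_trans t0 ts)) (negbT (gt_eqF ts)).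
have sd : `|s - t| < delta.
  rewrite /s addrAC subrr add0r gtr0_norm ?divr_gt0 //.
  lra.
move=> /(_ sd).
have q0 : 0 <= (tilted_sse s X (c s) - tilted_sse t X (c t)) / (s - t).
  by rewrite divr_ge0 // subr_ge0 ?(mono s ts) ?ltW.
move=> h; have := le_lt_trans (ler_norm _) h.
lra.
Qed.
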